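(* Let $p\ge1$ and let $\bm A\in\mathbb{R}^{m\times d}$, $\bm B\in\mathbb{R}^{n\times d}$ be finite sequences of vectors with rows $\bm a_i$, $\bm b_j$. Then \[\Big\|\sum_{i=1}^m\bm a_i-\sum_{j=1}^n\bm b_j\Big\|_p\le d^p_{\mathrm{ERP}}(\bm A,\bm B).\]
   Context: The ERP distance is defined recursively: $d^p_{\mathrm{ERP}}(\bm A,\emptyset)=\sum_{i=1}^m\|\bm a_i\|_p$, $d^p_{\mathrm{ERP}}(\emptyset,\bm B)=\sum_{i=1}^n\|\bm b_i\|_p$, and otherwise $d^p_{\mathrm{ERP}}(\bm A,\bm B)=\min\{\|\bm a_1\|_p+d^p_{\mathrm{ERP}}(\bm A_{2:},\bm B),\ \|\bm b_1\|_p+d^p_{\mathrm{ERP}}(\bm A,\bm B_{2:}),\ \|\bm a_1-\bm b_1\|_p+d^p_{\mathrm{ERP}}(\bm A_{2:},\bm B_{2:})\}$, where $\emptyset$ is the empty sequence and $\bm A_{2:}$ removes the first row. *)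

(* Defs.v *)
From HB Require Import structures.
From mathcomp Require Import all_boot all_order all_algebra.
From mathcomp Require Import all_classical all_reals all_analysis.
Set Implicit Arguments. Unset Strict Implicit. Unset Printing Implicit Defensive.
Import Order.TTheory GRing.Theory Num.Theory.
Local Open Scope ring_scope.

Section ERP.
Variables (R : realType) (d : nat) (p : R).

Definition pnorm (x : 'rV[R]_d) : R :=
  (\sum_(j < d) `|x 0 j| `^ p) `^ p^-1.

Fixpoint erp (A : seq 'rV[R]_d) : seq 'rV[R]_d -> R :=
  match A with
  | [::] => fun B => \sum_(b <- B) pnorm b
  | a :: A' =>
      fix erpA (B : seq 'rV[R]_d) : R :=
        match B with
        | [::] => \sum_(x <- a :: A') pnorm x
        | b :: B' =>
            Num.min (pnorm a + erp A' B)
              (Num.min (pnorm b + erpA B') (pnorm (a - b) + erp A' B'))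
        end
  end.

Definition rows (m : nat) (A : 'M[R]_(m, d)) : seq 'rV[R]_d :=
  [seq row i A | i <- enum 'I_m].

End ERP.

(* Main.v *)
Require Import Defs.
From HB Require Import structures.
From mathcomp Require Import all_boot all_order all_algebra.
From mathcomp Require Import all_classical all_reals all_analysis.
From mathcomp Require Import ring lra.
Import Order.TTheory GRing.Theory Num.Theory.
Local Open Scope ring_scope.

Lemma powR_conv (R : realType) (p l u v : R) : 1 <= p -> 0 <= l -> l <= 1 ->
  0 <= u -> 0 <= v ->
  (l * u + (1 - l) * v) `^ p <= l * u `^ p + (1 - l) * v `^ p.
Proof.
move=> p1 l0 l1 u0 v0.
have := @convex_powR R p p1 (Itv01 l0 l1) u v.
rewrite !inE /= !in_itv /= !andbT => /(_ u0 v0).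
by rewrite !convRE.
Qed.

Section Mink.
Variables (R : realType) (d : nat) (p : R).
Hypothesis p1 : 1 <= p.

Let p0 : 0 < p. Proof. exact: lt_le_trans p1. Qed.

Definition S (x : 'rV[R]_d) := \sum_(j < d) `|x 0 j| `^ p.

Lemma S_ge0 x : 0 <= S x.
Proof. by apply: sumr_ge0 => j _; exact: powR_ge0. Qed.

Lemma pnorm_ge0 (x : 'rV[R]_d) : 0 <= pnorm p x.
Proof. exact: powR_ge0. Qed.

Lemma pnormP (x : 'rV[R]_d) : pnorm p x `^ p = S x.
Proof. by rewrite /pnorm -powRrM mulVf ?gt_eqF // powRr1 // S_ge0. Qed.

Lemma S0 (x : 'rV[R]_d) : pnorm p x = 0 -> forall j, x 0 j = 0.
Proof.
move=> /powR_eq0_eq0 H j.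
have : `|x 0 j| `^ p = 0.
  apply/eqP; rewrite eq_le powR_ge0 andbT -H /S.
  rewrite (bigD1 j) //= lerDl; apply: sumr_ge0 => k _; exact: powR_ge0.
by move/powR_eq0_eq0/eqP; rewrite normr_eq0 => /eqP.
Qed.

Lemma mink_core (x y : 'rV[R]_d) (a b : R) : 0 < a -> 0 < b ->
  S x = a `^ p -> S y = b `^ p -> S (x + y) <= (a + b) `^ p.
Proof.
move=> a0 b0 Sx Sy.
have c0 : 0 < a + b by exact: addr_gt0.
have [c cE] : exists c, c = a + b by eexists.
rewrite -cE; rewrite -cE in c0.
have a0' := ltW a0; have b0' := ltW b0; have c0' := ltW c0.
have [l lE] : exists l, l = a / c by eexists.
have l0 : 0 <= l by rewrite lE; exact: divr_ge0.
have l1 : l <= 1 by rewrite lE ler_pdivrMr // mul1r cE lerDl.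
have l1' : 0 <= 1 - l by rewrite subr_ge0.
have lb : 1 - l = b / c.
  have cn0 : a + b != 0 by rewrite -cE gt_eqF.
  by rewrite lE cE; field.
apply: (@le_trans _ _ (\sum_(j < d) c `^ p *
    (l * (`|x 0 j| / a) `^ p + (1 - l) * (`|y 0 j| / b) `^ p))).
  apply: ler_sum => j _.
  rewrite -ler_pdivrMl; last exact: powR_gt0.
  have u0 : 0 <= `|x 0 j| / a by exact: divr_ge0.
  have v0 : 0 <= `|y 0 j| / b by exact: divr_ge0.
  have H := @powR_conv _ _ _ _ _ p1 l0 l1 u0 v0.
  apply: (le_trans _ H).
  have -> : (c `^ p)^-1 = (c^-1) `^ p.
    by rewrite -powR_inv1 ?powR_ge0 // powRAC powR_inv1.
  have ci0 : 0 <= c^-1 by rewrite invr_ge0.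
  rewrite -powRM //.
  apply: ge0_ler_powR; rewrite ?nnegrE.
  - exact: ltW.
  - exact: mulr_ge0.
  - by rewrite addr_ge0 // mulr_ge0.
  have an0 : a != 0 by rewrite gt_eqF.
  have bn0 : b != 0 by rewrite gt_eqF.
  have cn0 : c != 0 by rewrite gt_eqF.
  have -> : l * (`|x 0 j| / a) + (1 - l) * (`|y 0 j| / b) =
      c^-1 * (`|x 0 j| + `|y 0 j|).
    by rewrite lb lE; field; rewrite cn0 an0 bn0.
  have -> : (x + y) 0 j = x 0 j + y 0 j by rewrite !mxE.
  by rewrite ler_wpM2l // ler_normD.
rewrite -big_distrr /= big_split /= -!big_distrr /=.
have E : forall (z : 'rV[R]_d) (e : R), 0 < e -> S z = e `^ p ->
    \sum_(j < d) (`|z 0 j| / e) `^ p = 1.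
  move=> z e e0 ze.
  have e0' := ltW e0.
  have ei0 : 0 <= e^-1 by rewrite invr_ge0.
  have -> : 1 = S z / e `^ p.
    by rewrite ze mulfV // gt_eqF // powR_gt0.
  rewrite /S big_distrl /=; apply: eq_bigr => j _.
  rewrite powRM //; congr (_ * _).
  by rewrite -powR_inv1 // powRAC powR_inv1 // powR_ge0.
by rewrite (E x a) // (E y b) // !mulr1 subrKC mulr1.
Qed.

Lemma minkowski (x y : 'rV[R]_d) : pnorm p (x + y) <= pnorm p x + pnorm p y.
Proof.
have [a0|] := eqVneq (pnorm p x) 0.
  have -> : x + y = y.
    by apply/rowP => j; rewrite !mxE (S0 _ a0 j) add0r.
  by rewrite a0 add0r.
have [b0|] := eqVneq (pnorm p y) 0.
  have -> : x + y = x.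
    by apply/rowP => j; rewrite !mxE (S0 _ b0 j) addr0.
  by rewrite b0 addr0.
move=> bn0 an0.
have a0 : 0 < pnorm p x by rewrite lt_def an0 pnorm_ge0.
have b0 : 0 < pnorm p y by rewrite lt_def bn0 pnorm_ge0.
have key := @mink_core x y _ _ a0 b0 (esym (pnormP x)) (esym (pnormP y)).
move: (pnorm p x) (pnorm p y) a0 b0 key => a b a0 b0 key.
have c0 : 0 < a + b by exact: addr_gt0.
rewrite /pnorm -/(S (x + y)).
have -> : a + b = ((a + b) `^ p) `^ p^-1.
  by rewrite -powRrM mulfV ?gt_eqF // powRr1 // ltW.
apply: ge0_ler_powR => //.
- by rewrite invr_ge0 ltW.
- by rewrite nnegrE S_ge0.
- by rewrite nnegrE powR_ge0.
Qed.

Lemma pnorm0 : pnorm p (0 : 'rV[R]_d) = 0.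
Proof.
rewrite /pnorm big1 ?powR0 //; first by rewrite invr_neq0 // gt_eqF.
by move=> j _; rewrite mxE normr0 powR0 // gt_eqF.
Qed.

Lemma pnormN (x : 'rV[R]_d) : pnorm p (- x) = pnorm p x.
Proof. by rewrite /pnorm; congr (_ `^ _); apply: eq_bigr => j _; rewrite mxE normrN. Qed.

Lemma pnorm_sum (B : seq 'rV[R]_d) :
  pnorm p (\sum_(b <- B) b) <= \sum_(b <- B) pnorm p b.
Proof.
elim: B => [|b B IH]; first by rewrite !big_nil pnorm0.
rewrite !big_cons; apply: le_trans (minkowski _ _) _.
by rewrite lerD2l.
Qed.

Lemma erp_main (A B : seq 'rV[R]_d) :
  pnorm p (\sum_(a <- A) a - \sum_(b <- B) b) <= erp p A B.
Proof.
elim: A B => [|a A IHA] B.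
  by rewrite big_nil sub0r pnormN; exact: pnorm_sum.
elim: B => [|b B IHB].
  by rewrite big_nil subr0; exact: pnorm_sum.
rewrite [erp _ _ _]/= !le_min; apply/and3P; split.
- have -> : \sum_(x <- a :: A) x - \sum_(y <- b :: B) y
      = a + (\sum_(x <- A) x - \sum_(y <- b :: B) y).
    by rewrite big_cons addrA.
  apply: le_trans (minkowski _ _) _.
  by rewrite lerD2l; exact: IHA.
- have -> : \sum_(x <- a :: A) x - \sum_(y <- b :: B) y
      = - b + (\sum_(x <- a :: A) x - \sum_(y <- B) y).
    by rewrite [\sum_(y <- b :: B) y]big_cons opprD addrCA.
  apply: le_trans (minkowski _ _) _.
  by rewrite pnormN lerD2l; exact: IHB.
- have -> : \sum_(x <- a :: A) x - \sum_(y <- b :: B) y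
      = (a - b) + (\sum_(x <- A) x - \sum_(y <- B) y).
    by rewrite !big_cons opprD addrACA.
  apply: le_trans (minkowski _ _) _.
  by rewrite lerD2l; exact: IHA.
Qed.
End Mink.

Theorem lemma2 (R : realType) (p : R) (m n d : nat)
    (A : 'M[R]_(m, d)) (B : 'M[R]_(n, d)) :
  1 <= p ->
  pnorm p (\sum_(i < m) row i A - \sum_(j < n) row j B)
    <= erp p (rows A) (rows B).
Proof.
move=> p1.
have H := @erp_main R d p p1 (rows A) (rows B).
have E : forall k (M : 'M[R]_(k, d)), \sum_(i < k) row i M = \sum_(r <- rows M) r.
  by move=> k M; rewrite /rows big_map enumT.
by rewrite !E.
Qed.
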